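(* Let $G$ be a finite group and $X$ a finite $G$-poset. For $n\ge1$, $X^{(n)}/G$ is contractible if and only if $X'/G$ is contractible. If $X$ satisfies property (B), then $X^{(n)}/G$ is contractible if and only if $X/G$ is contractible.
   Context: Finite posets are regarded as finite $T_0$ topological spaces whose open sets are the down-sets; ''contractible'' refers to this topology. A finite $G$-poset is a finite poset with a right action of $G$ by order-preserving maps. $Y'$ is the poset of non-empty chains of $Y$ ordered by inclusion, $Y^{(n)}$ the $n$-th iterated subdivision. $Y/G$ is the orbit poset: $\overline{y}\le\overline{z}$ iff some representatives satisfy $y_1\le z_1$. $X$ satisfies property (B) if whenever $\{v_0,\dots,v_n\}$ and $\{v_0^{g_0},\dots,v_n^{g_n}\}$ are both chains of $X$ with $g_i\in G$, there is $g\in G$ with $v_i^{g_i}=v_i^g$ for all $i$. *)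

(* Defs.v *)
From HB Require Import structures.
From mathcomp Require Import all_boot all_order all_algebra all_fingroup.
From mathcomp Require Import all_classical all_reals.
From mathcomp Require Import topology normedtype Rstruct Rstruct_topology.

Set Implicit Arguments.
Unset Strict Implicit.
Unset Printing Implicit Defensive.


(* (The partial order axioms are imposed as hypotheses where needed; the      *)
(* topology below only uses the relation.)                                     *)
Record fposet := FPoset { pcarrier : finType ; ple : rel pcarrier }.

(* The finite T_0 space associated with a finite poset: open sets are the      *)
(* down-sets.                                                                   *)
Definition fspace (X : fposet) : Type := pcarrier X.
HB.instance Definition _ (X : fposet) := Choice.on (fspace X).

Definition downset (X : fposet) (U : set (fspace X)) :=
  forall x y : fspace X, ple y x -> U x -> U y.

Lemma downsetT (X : fposet) : downset [set: fspace X]%classic.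
Proof. by []. Qed.

Lemma downsetI (X : fposet) : setI_closed (@downset X).
Proof. by move=> A B hA hB x y yx [Ax Bx]; split; [exact: hA yx Ax|exact: hB yx Bx]. Qed.

Lemma downset_bigU (X : fposet) (I : Type) (f : I -> set (fspace X)) :
  (forall i, downset (f i)) -> downset (\bigcup_i f i)%classic.
Proof. by move=> hf x y yx [i _ hfx]; exists i => //; exact: hf yx hfx. Qed.

HB.instance Definition _ (X : fposet) :=
  isOpenTopological.Build (fspace X) (@downsetT X) (@downsetI X) (@downset_bigU X).

Section Contr.
Local Open Scope classical_set_scope.
Definition contractible (X : fposet) : Prop :=
  exists (x0 : fspace X) (H : fspace X * Rdefinitions.R -> fspace X),
    {within ([set: fspace X] `*` `[0%R, 1%R])%classic, continuous H} /\
    (forall x, H (x, 0%R) = x) /\ (forall x, H (x, 1%R) = x0).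
End Contr.

Record gposet (gT : finGroupType) := GPoset {
  gpos :> fposet ;
  gact : pcarrier gpos -> gT -> pcarrier gpos ;
  gact_mono : forall x y g, ple x y -> ple (gact x g) (gact y g) }.

Definition is_chain (X : fposet) (c : {set pcarrier X}) : bool :=
  [forall x in c, forall y in c, ple x y || ple y x].

Definition chain_pred (X : fposet) : pred {set pcarrier X} :=
  fun c => (c != finset.set0) && is_chain c.

Definition chains (X : fposet) : finType := {c : {set pcarrier X} | @chain_pred X c}.

Definition sd_poset (X : fposet) : fposet :=
  @FPoset (chains X) (fun c d => val c \subset val d).

Section SdAction.
Variables (gT : finGroupType) (X : gposet gT).

Lemma sd_act_chain (c : chains X) (g : gT) :
  @chain_pred X [set gact x g | x in val c].
Proof.
case: c => c /= /andP [c0 cc]; apply/andP; split.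
  case/set0Pn: c0 => x xc; apply/set0Pn; exists (gact x g); exact: imset_f.
apply/forallP => x'; apply/implyP => /imsetP [x xc ->].
apply/forallP => y'; apply/implyP => /imsetP [y yc ->].
have /forallP /(_ x) /implyP /(_ xc) /forallP /(_ y) /implyP /(_ yc) := cc.
by case/orP => h; apply/orP; [left|right]; exact: gact_mono.
Qed.

Definition sd_act (c : chains X) (g : gT) : chains X :=
  exist (fun d => @chain_pred X d) _ (sd_act_chain c g).

Lemma sd_act_mono (c d : chains X) (g : gT) :
  @ple (sd_poset X) c d -> @ple (sd_poset X) (sd_act c g) (sd_act d g).
Proof. by move=> /= cd; apply: imsetS. Qed.

Definition sd : gposet gT := @GPoset gT (sd_poset X) sd_act sd_act_mono.
End SdAction.

Fixpoint sdn (gT : finGroupType) (n : nat) (X : gposet gT) : gposet gT :=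
  if n is m.+1 then sd (sdn m X) else X.

Definition orbitG (gT : finGroupType) (X : gposet gT) (x : pcarrier X) :
  {set pcarrier X} := [set gact x g | g : gT].

Definition is_orbit (gT : finGroupType) (X : gposet gT) : pred {set pcarrier X} :=
  fun A => [exists x, A == orbitG x].

Definition orbits (gT : finGroupType) (X : gposet gT) : finType :=
  {A : {set pcarrier X} | @is_orbit gT X A}.

Definition orbit_poset (gT : finGroupType) (X : gposet gT) : fposet :=
  @FPoset (orbits X)
    (fun A B => [exists y in val A, exists z in val B, ple y z]).

Definition propB (gT : finGroupType) (X : gposet gT) : Prop :=
  forall (k : nat) (v : 'I_k -> pcarrier X) (gs : 'I_k -> gT),
    (forall i j, ple (v i) (v j) || ple (v j) (v i)) ->
    (forall i j, ple (gact (v i) (gs i)) (gact (v j) (gs j))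
                 || ple (gact (v j) (gs j)) (gact (v i) (gs i))) ->
    exists g : gT, forall i, gact (v i) (gs i) = gact (v i) g.

(* Main.v *)
Require Import Defs.
From HB Require Import structures.
From mathcomp Require Import all_boot all_order all_algebra all_fingroup.
From mathcomp Require all_classical all_reals.
From mathcomp Require topology normedtype Rstruct Rstruct_topology.
From mathcomp Require lra.
From Stdlib Require Import FunctionalExtensionality Classical.
Set Implicit Arguments.
Unset Strict Implicit.
Unset Printing Implicit Defensive.
Notation funext := functional_extensionality.

Module MC1.

Section Htp.
Variables (T : finType) (le : rel T).
Definition mono (f : T -> T) := forall x y, le x y -> le (f x) (f y).
Definition lef (f g : T -> T) := forall x, le (f x) (g x).
Inductive htp (f : T -> T) : (T -> T) -> Prop :=
| htp0 : mono f -> htp f f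
| htpS g h : htp f g -> mono h -> lef g h \/ lef h g -> htp f h.
Definition hcontr := exists p : T, htp id (fun _ => p).

Lemma htp_mono f g : htp f g -> mono f /\ mono g.
Proof. by elim=> // g0 h _ [mf _] mh _. Qed.

Lemma htp_trans f g h : htp f g -> htp g h -> htp f h.
Proof. by move=> fg; elim=> // g0 h0 _ IH mh c; apply: htpS IH mh c. Qed.

Lemma htp_step f g : mono f -> mono g -> lef f g \/ lef g f -> htp f g.
Proof. by move=> mf mg c; apply: htpS (htp0 mf) mg c. Qed.

Lemma htp_sym f g : htp f g -> htp g f.
Proof.
elim=> [mf|g0 h0 fg IH mh c]; first exact: htp0.
have [mf mg0] := htp_mono fg.
apply: htp_trans _ IH; apply: htp_step => //; case: c; by [right|left].
Qed.
End Htp.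

Section Comp.
Variables (T1 T2 : finType) (le1 : rel T1) (le2 : rel T2).
Variables (a : T1 -> T2) (b : T2 -> T1).
Hypotheses (ma : forall x y, le1 x y -> le2 (a x) (a y))
           (mb : forall x y, le2 x y -> le1 (b x) (b y)).

Lemma htp_comp f g : htp le1 f g -> htp le2 (a \o f \o b) (a \o g \o b).
Proof.
have mc h : mono le1 h -> mono le2 (a \o h \o b).
  by move=> mh x y /mb /mh /ma.
elim=> [mf|g0 h0 _ IH mh c]; first exact/htp0/mc.
apply: htpS IH (mc _ mh) _; case: c => c; [left|right] => x; exact: ma.
Qed.
End Comp.

Lemma HE (T1 T2 : finType) (le1 : rel T1) (le2 : rel T2)
  (f : T1 -> T2) (g : T2 -> T1) :
  (forall x y, le1 x y -> le2 (f x) (f y)) ->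
  (forall x y, le2 x y -> le1 (g x) (g y)) ->
  htp le2 (f \o g) id ->
  hcontr le1 -> hcontr le2.
Proof.
move=> mf mg fg [p hp]; exists (f p).
have := htp_comp mf mg hp => /= h.
exact: htp_trans (htp_sym fg) h.
Qed.

Lemma HE2 (T1 T2 : finType) (le1 : rel T1) (le2 : rel T2)
  (f : T1 -> T2) (g : T2 -> T1) :
  (forall x y, le1 x y -> le2 (f x) (f y)) ->
  (forall x y, le2 x y -> le1 (g x) (g y)) ->
  htp le2 (f \o g) id -> htp le1 (g \o f) id ->
  hcontr le1 <-> hcontr le2.
Proof. by move=> mf mg h1 h2; split; [apply: (HE mf mg) | apply: (HE mg mf)]. Qed.

Section Beat.
Variables (T : finType) (le : rel T).
Definition beat (x y : T) :=
  x != y /\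
  ((le y x /\ forall z, le z x -> z != x -> le z y) \/
   (le x y /\ forall z, le x z -> z != x -> le y z)).
Definition minimal := forall x y, ~ beat x y.
Definition porder := [/\ reflexive le, antisymmetric le & transitive le].
End Beat.

Lemma beat_flip (T : finType) (le : rel T) x y : beat le x y -> beat (fun a b => le b a) x y.
Proof. by case=> nxy [[h1 h2]|[h1 h2]]; split=> //; [right|left]. Qed.

Lemma porder_flip (T : finType) (le : rel T) : porder le -> porder (fun a b => le b a).
Proof.
case=> r a t; split.
- by move=> x.
- by move=> x y /= /andP [h1 h2]; apply: a; rewrite h1 h2.
- by move=> x y z /= h1 h2; apply: t h2 h1.
Qed.

Lemma htp_flip (T : finType) (le : rel T) f g : htp le f g -> htp (fun a b => le b a) f g.
Proof.
elim=> [mf|g0 h0 _ IH mh c]; first by apply: htp0 => x y; apply: mf.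
apply: htpS IH _ _; first by move=> x y; apply: mh.
by case: c; [right|left].
Qed.

Lemma hcontr_flip (T : finType) (le : rel T) : hcontr le -> hcontr (fun a b => le b a).
Proof. by case=> p hp; exists p; apply: htp_flip. Qed.

Lemma stong_le (T : finType) (le : rel T) f : porder le -> minimal le -> mono le f ->
  lef le f id -> f = id.
Proof.
case=> lr la lt mn mf fle; apply: funext.
suff H n x : #|[set z | le z x]| <= n -> f x = x by move=> x; exact: H _ _ (leqnn _).
elim: n x => [|n IH] x.
  by rewrite leqn0 => /eqP/cards0_eq/setP/(_ x); rewrite inE lr in_set0.
move=> hc; apply/eqP; apply/negPn/negP => fx.
apply: (mn x (f x)); split; first by rewrite eq_sym.
left; split; first exact: fle.
move=> z zx nzx.
have -> : z = f z.
  apply/esym/IH; rewrite -ltnS; apply: leq_trans hc.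
  apply: proper_card; apply/properP; split.
    by apply/subsetP => w; rewrite !inE => wz; apply: lt wz zx.
  exists x; rewrite !inE ?lr //; apply/negP => xz.
  by apply/negP: nzx; rewrite negbK; apply/eqP/la; rewrite zx xz.
exact: mf.
Qed.

Lemma stong (T : finType) (le : rel T) f : porder le -> minimal le -> mono le f ->
  lef le f id \/ lef le id f -> f = id.
Proof.
move=> po mn mf [h|h]; first exact: (stong_le po mn mf h).
apply: (@stong_le T (fun a b => le b a)).
- exact: porder_flip.
- move=> x y hb; apply: (mn x y).
  by case: hb => nxy [[h1 h2]|[h1 h2]]; split=> //; [right|left].
- by move=> x y; apply: mf.
- exact: h.
Qed.

End MC1.
Import MC1.

Module MC2.

Lemma minimal_hcontr (T : finType) (le : rel T) : porder le -> minimal le ->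
  hcontr le -> forall x y : T, x = y.
Proof.
move=> po mn [p hp].
suff e : (fun _ : T => p) = id by move=> x y; rewrite -[x]/(id x) -[y]/(id y) -e.
have H g : htp le id g -> g = id.
  move=> hg; induction hg as [|g0 h _ IH mh c] => //; subst g0.
  by apply: (stong po mn mh); case: c => c; [right|left].
exact: H.
Qed.

Lemma single_hcontr (T : finType) (le : rel T) (p : T) : reflexive le ->
  (forall x : T, x = p) -> hcontr le.
Proof.
move=> lr h; exists p.
have -> : (fun _ : T => p) = id by apply: functional_extensionality => x; rewrite [in RHS](h x).
by apply: htp0 => x y.
Qed.

Section Chains.
Variables (T : finType) (le : rel T).
Let P := @FPoset T le.

Lemma chainP (c : {set T}) :
  reflect (forall x y, x \in c -> y \in c -> le x y || le y x) (@is_chain P c).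
Proof.
apply: (iffP forallP) => [h x y xc yc|h x].
  by move: (h x); rewrite xc /= => /forallP /(_ y); rewrite yc.
by apply/implyP => xc; apply/forallP => y; apply/implyP => yc; apply: h.
Qed.

Lemma chain_predP (c : {set T}) :
  reflect (c != set0 /\ forall x y, x \in c -> y \in c -> le x y || le y x)
    (@chain_pred P c).
Proof.
by apply: (iffP andP) => [[h1 /chainP h2]|[h1 h2]]; split => //; apply/chainP.
Qed.

Definition sdle (c d : chains P) := val c \subset val d.

Lemma porder_sd : porder sdle.
Proof.
split.
- by move=> c; apply: subxx.
- by move=> c d /andP [h1 h2]; apply: val_inj; apply/eqP; rewrite eqEsubset; apply/andP.
- by move=> c d e h1 h2; apply: subset_trans h1 h2.
Qed.
End Chains.

End MC2.
Import MC2.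

Module MC3.

Section BeatRetract.
Variables (T : finType) (le : rel T).
Hypothesis po : porder le.
Variables (x y : T).
Hypothesis bxy : beat le x y.

Let lr : reflexive le. Proof. by case: po. Qed.
Let la : antisymmetric le. Proof. by case: po. Qed.
Let lt : transitive le. Proof. by case: po. Qed.

Definition S := {z : T | z != x}.
Definition leS (a b : S) := le (val a) (val b).

Let yx : y != x. Proof. by case: bxy => h _; rewrite eq_sym. Qed.
Definition y0 : S := exist _ y yx.
Definition rr (z : T) := if z == x then y else z.
Lemma rr_neq z : rr z != x. Proof. by rewrite /rr; case: ifPn. Qed.
Definition r (z : T) : S := insubd y0 (rr z).
Lemma val_r z : val (r z) = rr z. Proof. by rewrite /r insubdK //; exact: rr_neq. Qed.

Lemma rr_mono : mono le rr.
Proof.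
move=> a b ab; rewrite /rr.
case: bxy => _ [[h1 h2]|[h1 h2]].
- case: eqP => [ax|ax]; case: eqP => [bx|bx] //.
  + by apply: lt h1 _; rewrite -ax.
  + by apply: h2; [rewrite -bx | apply/eqP].
- case: eqP => [ax|ax]; case: eqP => [bx|bx] //.
  + by apply: h2; [rewrite -ax | apply/eqP].
  + by apply: lt h1; rewrite -bx.
Qed.

Lemma rr_cmp : lef le rr id \/ lef le id rr.
Proof.
rewrite /lef /rr; case: bxy => _ [[h1 h2]|[h1 h2]]; [left|right] => z;
  case: eqP => [->|_] //.
Qed.

Lemma rr_val (s : S) : rr (val s) = val s.
Proof. by rewrite /rr; case: s => s /= /negPf ->. Qed.

Lemma hcontr_beat : hcontr le <-> hcontr leS.
Proof.
apply: (@HE2 _ _ le leS r val).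
- by move=> a b ab; rewrite /leS !val_r; apply: rr_mono.
- by [].
- have -> : r \o val = id.
    by apply: functional_extensionality => s; apply: val_inj; rewrite /= val_r rr_val.
  by apply: htp0 => a b.
- have -> : val \o r = rr by apply: functional_extensionality => z; rewrite /= val_r.
  apply: htp_step; [exact: rr_mono | by move=> a b | exact: rr_cmp].
Qed.

Lemma porder_S : porder leS.
Proof.
split.
- by move=> a; apply: lr.
- by move=> a b h; apply: val_inj; apply: la.
- by move=> a b c; apply: lt.
Qed.


Let P := @FPoset T le.
Let PS := @FPoset S leS.

Lemma chain_y0 : @chain_pred PS [set y0].
Proof.
apply/chain_predP; split; first by apply/set0Pn; exists y0; rewrite inE.
by move=> a b; rewrite !inE => /eqP -> /eqP ->; rewrite /leS lr.
Qed.
Definition d0 : chains PS := @exist _ (fun c => @chain_pred PS c) _ chain_y0.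

Lemma chain_y : @chain_pred P [set y].
Proof.
apply/chain_predP; split; first by apply/set0Pn; exists y; rewrite inE.
by move=> a b; rewrite !inE => /eqP -> /eqP ->; rewrite lr.
Qed.
Definition c0 : chains P := @exist _ (fun c => @chain_pred P c) _ chain_y.

Definition phiA (c : chains P) : {set S} := [set z : S | val z \in rr @: val c].
Definition phi (c : chains P) : chains PS := insubd d0 (phiA c).

Lemma chain_phiA c : @chain_pred PS (phiA c).
Proof.
have /chain_predP [c0n cc] := valP c; apply/chain_predP; split.
  case/set0Pn: c0n => w wc; apply/set0Pn; exists (r w).
  by rewrite inE val_r; apply: imset_f.
move=> a b; rewrite !inE /leS => /imsetP [a' a'c ->] /imsetP [b' b'c ->].
by case/orP: (cc _ _ a'c b'c) => h; apply/orP; [left|right]; apply: rr_mono.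
Qed.

Lemma val_phi c : val (phi c) = phiA c.
Proof. by rewrite /phi insubdK //; exact: chain_phiA. Qed.

Definition vS (z : S) : T := val z.
Definition psi (d : chains PS) : chains P := insubd c0 (vS @: val d).

Lemma chain_psiA (d : chains PS) : @chain_pred P (vS @: val d).
Proof.
have /chain_predP [d0n dd] := valP d; apply/chain_predP; split.
  case/set0Pn: d0n => w wd; apply/set0Pn; exists (vS w); exact: imset_f.
by move=> a b /imsetP [a' a'd ->] /imsetP [b' b'd ->]; apply: dd.
Qed.

Lemma val_psi (d : chains PS) : val (psi d) = vS @: val d.
Proof. by rewrite /psi insubdK //; exact: chain_psiA. Qed.

Definition hA (c : chains P) := val c :|: rr @: val c.

Lemma chain_hA c : @chain_pred P (hA c).
Proof.
have /chain_predP [c0n cc] := valP c; apply/chain_predP; split.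
  case/set0Pn: c0n => w wc; apply/set0Pn; exists w; rewrite /hA /= inE wc.
  by [].
have key a b : a \in val c -> b \in val c -> le (rr a) b || le b (rr a).
  move=> ac bc; rewrite /rr; case: eqP => [ax|_]; last exact: cc.
  case: (eqVneq b x) => [->|bx]; first by case: bxy => _ [[h1 _]|[h1 _]]; rewrite h1 ?orbT.
  subst a; case/orP: (cc _ _ ac bc) => h; case: bxy => _ [[h1 h2]|[h1 h2]].
  - by rewrite (lt h1 h).
  - by rewrite (h2 _ h bx).
  - by rewrite (h2 _ h bx) orbT.
  - by rewrite (lt h h1) orbT.
move=> a b; rewrite /hA /= !inE => /orP [ac|/imsetP [a' a'c ->]] /orP [bc|/imsetP [b' b'c ->]].
- exact: cc.
- by rewrite orbC; apply: key.
- exact: key.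
- by case/orP: (cc _ _ a'c b'c) => h; apply/orP; [left|right]; apply: rr_mono.
Qed.

Definition h (c : chains P) : chains P := insubd c (hA c).
Lemma val_h c : val (h c) = hA c.
Proof. by rewrite /h insubdK //; exact: chain_hA. Qed.

Lemma phi_mono : forall a b, sdle a b -> sdle (phi a) (phi b).
Proof.
move=> a b ab; rewrite /sdle !val_phi; apply/subsetP => z; rewrite !inE.
by apply/subsetP/imsetS.
Qed.

Lemma psi_mono : forall a b, sdle a b -> sdle (psi a) (psi b).
Proof. by move=> a b ab; rewrite /sdle !val_psi; apply: imsetS. Qed.

Lemma h_mono : mono (@sdle T le) h.
Proof.
move=> a b ab; rewrite /sdle !val_h /hA; apply: setUSS => //; exact: imsetS.
Qed.

Lemma phi_psi : phi \o psi = id.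
Proof.
apply: functional_extensionality => d; apply: val_inj; rewrite /= val_phi /phiA val_psi.
apply/setP => z; rewrite inE -imset_comp.
rewrite (eq_imset (g := vS)); last by move=> s; rewrite /= /vS rr_val.
by rewrite mem_imset //; exact: val_inj.
Qed.

Lemma val_psi_phi c : val (psi (phi c)) = rr @: val c.
Proof.
rewrite val_psi val_phi /phiA; apply/setP => w; apply/imsetP/idP.
  by case=> z; rewrite inE => zi ->.
move=> wi; have wx : w != x by case/imsetP: wi => w' _ ->; apply: rr_neq.
by exists (exist _ w wx); rewrite // inE.
Qed.

Lemma hcontr_sd_beat : hcontr (@sdle T le) <-> hcontr (@sdle S leS).
Proof.
apply: (@HE2 _ _ _ _ phi psi phi_mono psi_mono).
- by rewrite phi_psi; apply: htp0 => a b.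
- have mpp : mono (@sdle T le) (psi \o phi) by move=> a b ab; apply/psi_mono/phi_mono.
  apply: (@htp_trans _ _ _ h).
    apply: htp_step => //; first exact: h_mono.
    by left => c; rewrite /sdle /= val_h val_psi_phi /hA subsetUr.
  apply: htp_step => //; first exact: h_mono.
  by right => c; rewrite /sdle /= val_h /hA subsetUl.
Qed.

Lemma card_S : #|{: S}| < #|{: T}|.
Proof.
rewrite card_sig; apply: proper_card; apply/properP; split; first exact/subsetP.
by exists x; rewrite ?inE //= eqxx.
Qed.

End BeatRetract.

End MC3.
Import MC3.

Module MC4.

Lemma dominated_up (T : finType) (le : rel T) : porder le -> forall v w,
  v != w -> le v w ->
  (forall z, le z v || le v z -> le z w || le w z) -> exists a b, beat le a b.
Proof.
case=> lr la lt v w vw lvw hz.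
pose Sx := [pred u | le v u && le u w && (u != w)].
have Sv : Sx v by rewrite /Sx /= lr lvw vw.
case: (arg_maxnP (fun u => #|[set z | le z u]|) Sv) => u.
rewrite /Sx /= => /andP [/andP [vu uw] nuw] umax.
exists u, w; split => //; right; split => // z uz zu.
have vz : le v z by apply: lt uz.
have : le z v || le v z by rewrite vz orbT.
move/hz => /orP [zw|//].
case: (eqVneq z w) => [->|zw']; first exact: lr.
have := umax z; rewrite /= vz zw zw' => /(_ isT).
move=> hle; exfalso; move: hle; apply/negP; rewrite -ltnNge.
apply: proper_card; apply/properP; split.
  by apply/subsetP => t; rewrite !inE => tu; apply: lt tu uz.
exists z; rewrite !inE ?lr //; apply/negP => zu'.
by move/eqP: zu; apply; apply: la; rewrite zu' uz.
Qed.

Lemma dominated (T : finType) (le : rel T) : porder le -> forall v w,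
  v != w -> le v w || le w v ->
  (forall z, le z v || le v z -> le z w || le w z) -> exists a b, beat le a b.
Proof.
move=> po v w vw /orP [lvw|lwv] hz; first exact: dominated_up po v w vw lvw hz.
have [|a [b hb]] := @dominated_up T (fun a b => le b a) (porder_flip po) v w vw lwv.
  by move=> z /=; rewrite orbC => /hz; rewrite orbC.
by exists a, b; case: hb => nab [[h1 h2]|[h1 h2]]; split => //; [right|left].
Qed.

Section Closure.
Variables (T : finType) (le : rel T).
Hypothesis po : porder le.
Let lr : reflexive le. Proof. by case: po. Qed.
Let la : antisymmetric le. Proof. by case: po. Qed.
Let lt : transitive le. Proof. by case: po. Qed.
Let P := @FPoset T le.

Definition maxch (F : chains P) : bool :=
  [forall d : chains P, (val F \subset val d) ==> (val d == val F)].

Lemma maxchP (F : chains P) : maxch F -> forall d : chains P, val F \subset val d -> d = F.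
Proof. by move=> /forallP h d Fd; apply: val_inj; apply/eqP; move/implyP: (h d); apply. Qed.

Lemma exists_max (c : chains P) : exists2 F, maxch F & val c \subset val F.
Proof.
case: (@arg_maxnP _ c (fun d : chains P => val c \subset val d) (fun d : chains P => #|val d|) (subxx (val c))) => F cF Fmax.
exists F => //; apply/forallP => d; apply/implyP => Fd.
rewrite eq_sym eqEcard Fd /=; apply: Fmax; exact: subset_trans cF Fd.
Qed.

Definition cl (c : chains P) : {set T} :=
  \bigcap_(F : chains P | maxch F && (val c \subset val F)) val F.

Lemma sub_cl (c : chains P) : val c \subset cl c.
Proof. by apply/bigcapsP => F /andP []. Qed.

Lemma cl_subF (c : chains P) (F : chains P) : maxch F -> val c \subset val F -> cl c \subset val F.
Proof. by move=> mF cF; apply: bigcap_inf; rewrite mF cF. Qed.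

Lemma chain_cl (c : chains P) : @chain_pred P (cl c).
Proof.
have /chain_predP [c0 _] := valP c.
case: (exists_max c) => F mF cF.
have /chain_predP [_ FF] := valP F.
apply/chain_predP; split.
  case/set0Pn: c0 => z zc; apply/set0Pn; exists z; exact: (subsetP (sub_cl c)).
move=> a b ac bc; apply: FF; exact: (subsetP (cl_subF mF cF)).
Qed.

Definition clc (c : chains P) : chains P := insubd c (cl c).
Lemma val_clc (c : chains P) : val (clc c) = cl c.
Proof. by rewrite /clc insubdK //; exact: chain_cl. Qed.

Lemma cl_mono (c : chains P) (d : chains P) : val c \subset val d -> cl c \subset cl d.
Proof.
move=> cd; apply/bigcapsP => F /andP [mF dF]; apply: cl_subF mF _.
exact: subset_trans cd dF.
Qed.

Lemma cl_idem (c : chains P) : clc (clc c) = clc c.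
Proof.
apply: val_inj; rewrite !val_clc; apply/eqP; rewrite eqEsubset; apply/andP; split.
  apply/bigcapsP => F /andP [mF cF]; have h1 := cl_subF mF cF.
  by apply: cl_subF mF _; rewrite val_clc.
by have := sub_cl (clc c); rewrite val_clc.
Qed.

Lemma cl_max (F : chains P) : maxch F -> clc F = F.
Proof.
move=> mF; apply: val_inj; rewrite val_clc; apply/eqP; rewrite eqEsubset.
by rewrite sub_cl cl_subF.
Qed.

Definition CS := {c : chains P | clc c == c}.
Definition leC (a b : CS) := @sdle T le (val a) (val b).

Definition toC (c : chains P) : CS := @exist _ (fun d => clc d == d) (clc c) (introT eqP (cl_idem c)).

Lemma val_toC c : val (toC c) = clc c. Proof. by []. Qed.

Lemma porder_leC : porder leC.
Proof.
have [r a t] := porder_sd le.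
split.
- by move=> c; apply: r.
- by move=> c d h; apply: val_inj; apply: a.
- by move=> c d e; apply: t.
Qed.

Lemma hcontr_closure : hcontr (@sdle T le) <-> hcontr leC.
Proof.
apply: (@HE2 _ _ _ _ toC val).
- by move=> a b ab; rewrite /leC /sdle /= !val_clc; apply: cl_mono.
- by [].
- have -> : toC \o val = id.
    apply: functional_extensionality => s; apply: val_inj => /=.
    by apply/eqP; exact: (valP s).
  by apply: htp0 => a b.
- apply: htp_step.
  + by move=> a b ab; rewrite /sdle /= !val_clc; apply: cl_mono.
  + by move=> a b.
  + by right => c; rewrite /sdle /= val_clc; apply: sub_cl.
Qed.

Lemma chain1 (v : T) : @chain_pred P [set v].
Proof.
apply/chain_predP; split; first by apply/set0Pn; exists v; rewrite inE.
by move=> a b; rewrite !inE => /eqP -> /eqP ->; rewrite lr.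
Qed.
Definition sing (v : T) : chains P := @exist _ (fun c => @chain_pred P c) _ (chain1 v).

Hypothesis mn : minimal le.

Lemma cl_sing v : clc (sing v) = sing v.
Proof.
apply: val_inj; rewrite val_clc; apply/eqP; rewrite eqEsubset sub_cl andbT.
apply/subsetP => w wc; rewrite inE; apply/negPn/negP => wv.
have inF F : maxch F -> v \in val F -> w \in val F.
  move=> mF vF; apply: (subsetP (cl_subF mF _)) wc.
  by rewrite /= sub1set.
have [a [b hb]] : exists a b, beat le a b.
  apply: (@dominated T le po v w); first by rewrite eq_sym.
    case: (exists_max (sing v)) => F mF; rewrite /= sub1set => vF.
    have /chain_predP [_ FF] := valP F; apply: FF => //; exact: inF.
  move=> z vz.
  have cz : @chain_pred P [set v; z].
    apply/chain_predP; split; first by apply/set0Pn; exists v; rewrite !inE eqxx.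
    move=> p q; rewrite !inE => /orP [] /eqP -> /orP [] /eqP ->; rewrite ?lr //.
    by rewrite orbC.
  case: (exists_max (@exist _ (fun c => @chain_pred P c) _ cz)) => F mF.
  rewrite /= subUset !sub1set => /andP [vF zF].
  have /chain_predP [_ FF] := valP F; apply: FF => //; exact: inF.
exact: mn hb.
Qed.

Definition singC (v : T) : CS := @exist _ (fun d => clc d == d) (sing v) (introT eqP (cl_sing v)).

Lemma minimal_leC : minimal leC.
Proof.
move=> s n [sn [[ns hd]|[sn' hu]]].
-
  have : val (val s) \subset val (val n).
    apply/subsetP => v vs.
    case: (eqVneq (singC v) s) => [e|ne].
      exfalso; move/eqP: sn; apply; apply: val_inj; apply: val_inj.
      apply/eqP; rewrite eqEsubset; apply/andP; split; last exact: ns.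
      have /chain_predP [n0 _] := valP (val n).
      rewrite -e /= sub1set.
      case/set0Pn: n0 => u un.
      have := subsetP ns _ un; rewrite -e /= inE => /eqP uv.
      by rewrite -uv.
    by have := hd (singC v); rewrite /leC /sdle /= sub1set => /(_ vs ne); rewrite sub1set.
  move=> sn2; move/eqP: sn; apply; apply: val_inj; apply: val_inj.
  by apply/eqP; rewrite eqEsubset sn2; exact: ns.
-
  have : val (val n) \subset val (val s).
    rewrite -(eqP (valP s)) val_clc.
    apply/bigcapsP => F /andP [mF sF].
    case: (eqVneq F (val s)) => [e|ne].
      exfalso; move/eqP: sn; apply; apply: val_inj.
      by rewrite -e; apply/esym/(maxchP mF); rewrite e; exact: sn'.
    have Fc : clc F == F by rewrite cl_max.
    have := hu (@exist _ (fun d => clc d == d) F Fc); rewrite /leC /sdle /=.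
    apply => //; apply/eqP => e; move/eqP: ne; apply; by rewrite -e.
  move=> ns; move/eqP: sn; apply; apply: val_inj; apply: val_inj.
  by apply/eqP; rewrite eqEsubset ns andbT; exact: sn'.
Qed.

Lemma minimal_sd : hcontr (@sdle T le) <-> hcontr le.
Proof.
rewrite hcontr_closure; split.
- move=> hc; have all_eq := minimal_hcontr porder_leC minimal_leC hc.
  case: hc => p _.
  have /chain_predP [p0 _] := valP (val p).
  case/set0Pn: p0 => v _.
  apply: (@single_hcontr _ _ v lr) => w.
  have := all_eq (singC w) (singC v) => /(congr1 (fun s => val (val s))) /= /setP /(_ w).
  by rewrite !inE eqxx => /esym /eqP.
- move=> hc; have all_eq := minimal_hcontr po mn hc.
  case: hc => p _.
  apply: (@single_hcontr _ _ (singC p)); first by move=> c; apply: subxx.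
  move=> s; apply: val_inj; apply: val_inj => /=.
  have /chain_predP [s0 _] := valP (val s).
  apply/eqP; rewrite eqEsubset; apply/andP; split.
    by apply/subsetP => u _; rewrite inE (all_eq u p).
  case/set0Pn: s0 => u us; rewrite sub1set -(all_eq u p) //.
Qed.

End Closure.

End MC4.
Import MC4.

Module MC5.

Theorem sd_hcontr_iff (T : finType) (le : rel T) : porder le ->
  (hcontr (@sdle T le) <-> hcontr le).
Proof.
have H n : forall (T : finType) (le : rel T), #|T| <= n -> porder le ->
    (hcontr (@sdle T le) <-> hcontr le).
  elim: n => [|n IH] T' le' hn po.
    apply: minimal_sd => // x y _.
    by move: hn; rewrite leqn0 => /eqP/card0_eq/(_ x); rewrite inE.
  case: (classic (exists x y, beat le' x y)) => [[x [y bxy]]|nb].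
    rewrite (hcontr_sd_beat po bxy) (hcontr_beat po bxy).
    apply: IH; last exact: porder_S.
    by rewrite -ltnS; apply: leq_trans hn; apply: card_S.
  apply: minimal_sd => // x y bxy; apply: nb; by exists x, y.
by move=> po; apply: (H #|T|).
Qed.

End MC5.
Import MC5.

Module MT1.
Import all_classical all_reals topology normedtype Rstruct Rstruct_topology lra.
Import Order.TTheory GRing.Theory Num.Theory.
Local Open Scope classical_set_scope.
Local Open Scope ring_scope.

Section Top.
Variable X : fposet.
Hypothesis lr : reflexive (@ple X).
Hypothesis lt : transitive (@ple X).

Definition dset (x : fspace X) : set (fspace X) := [set y | ple y x].

Lemma open_dset x : open (dset x).
Proof. move=> a b ba ax; exact: lt ba ax. Qed.

Lemma nbhs_fspace (x : fspace X) (A : set (fspace X)) : nbhs x A <-> dset x `<=` A.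
Proof.
rewrite nbhsE /=; split.
  case=> B [oB Bx] BA y yx; apply: BA; exact: oB yx Bx.
move=> h; exists (dset x) => //; split; [exact: open_dset | exact: lr].
Qed.

Lemma nbhs_R (t : Rdefinitions.R) (B : set Rdefinitions.R) :
  nbhs t B <-> exists2 e : Rdefinitions.R, 0 < e & forall s, `|t - s| < e -> B s.
Proof.
split.
  by move/nbhs_ballP => [e e0 h]; exists e => // s ts; apply: h.
by case=> e e0 h; apply/nbhs_ballP; exists e => // s ts; apply: h.
Qed.

Definition I01 : set Rdefinitions.R := `[0%R, 1%R].
Definition Dom := [set: fspace X] `*` I01.

Definition locc (H : fspace X * Rdefinitions.R -> fspace X) :=
  forall x t, I01 t -> exists2 e : Rdefinitions.R, 0 < e &
    forall y s, ple y x -> I01 s -> `|t - s| < e -> ple (H (y, s)) (H (x, t)).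

Lemma cont_locc H : {within Dom, continuous H} -> locc H.
Proof.
move/subspace_continuousP => hc x t t01.
have Dp : Dom (x, t) by split.
have := hc _ Dp (dset (H (x, t))).
have nU : nbhs (H (x, t)) (dset (H (x, t))) by apply/nbhs_fspace.
move=> /(_ nU) /=.
rewrite /within /= => -[[A B] /= [nA nB] AB].
move/nbhs_fspace: nA => nA.
move/nbhs_R: nB => [e e0 hB].
exists e => // y s yx s01 ts.
have : (A `*` B) (y, s) by split; [exact: nA | exact: hB].
by move/AB => /(_ (conj I s01)).
Qed.

Lemma locc_cont H : locc H -> {within Dom, continuous H}.
Proof.
move=> hl; apply/subspace_continuousP => -[x t] [_ t01] V /=.
move/nbhs_fspace => HV.
case: (hl x t t01) => e e0 he.
rewrite /within /=.
exists (dset x, [set s | `|t - s| < e]) => /=.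
  split; first exact/nbhs_fspace.
  by apply/nbhs_R; exists e.
move=> [y s] /= [yx ts] [_ s01]; apply: HV; exact: he.
Qed.
End Top.

End MT1.
Import MT1.

Module MT2.
Import all_classical all_reals topology normedtype Rstruct Rstruct_topology lra.
Import Order.TTheory GRing.Theory Num.Theory.
Local Open Scope classical_set_scope.
Local Open Scope ring_scope.

Lemma fin_eps (T : finType) (P : T -> Rdefinitions.R -> Prop) :
  (forall x e e', 0 < e' -> e' <= e -> P x e -> P x e') ->
  (forall x, exists2 e, 0 < e & P x e) ->
  exists2 e, 0 < e & forall x, P x e.
Proof.
move=> Pm hP.
suff [e e0 he] : exists2 e, 0 < e & forall x, x \in enum T -> P x e.
  by exists e => // x; apply: he; rewrite mem_enum.
elim: (enum T) => [|a s [e e0 he]]; first by exists 1.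
case: (hP a) => ea ea0 hea.
exists (Order.min e ea); first by rewrite lt_min e0 ea0.
move=> x; rewrite inE => /orP [/eqP ->|xs].
  by apply: Pm hea; [rewrite lt_min e0 ea0 | rewrite ge_min lexx orbT].
by apply: Pm (he x xs); [rewrite lt_min e0 ea0 | rewrite ge_min lexx].
Qed.

Section ContrHcontr.
Variable X : fposet.
Hypothesis lr : reflexive (@ple X).
Hypothesis lt : transitive (@ple X).
Let T := pcarrier X.

Lemma contr_hcontr : contractible X -> hcontr (@ple X).
Proof.
case=> x0 [H [hc [H0 H1]]].
have hl := cont_locc lr lt hc.
pose f (t : Rdefinitions.R) : T -> T := fun x => H (x, t).
have fm t : I01 t -> mono (@ple X) (f t).
  move=> t01 x y yx; case: (hl y t t01) => e e0 he.
  by apply: he => //; rewrite subrr normr0.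
pose good t e := 0 < e /\ forall s, I01 s -> `|t - s| < e -> lef (@ple X) (f s) (f t).
have hg t : I01 t -> exists e, good t e.
  move=> t01.
  have [e e0 he] := @fin_eps T (fun x e => forall s, I01 s -> `|t - s| < e ->
        ple (f s x) (f t x))
    (fun x e e' e'0 e'e h s s01 ts => h s s01 (lt_le_trans ts e'e))
    (fun x => let: ex_intro2 e e0 he := hl x t t01 in
        ex_intro2 _ _ e e0 (fun s s01 ts => he x s (lr x) s01 ts)).
  by exists e; split => // s s01 ts x; apply: he.
pose S := [set t | I01 t /\ htp (@ple X) id (f t)].
have I01c : connected I01.
  by apply/connected_intervalP; apply: interval_is_interval.
have SI : S = I01.
  apply: I01c.
  - exists 0; split; first by rewrite /I01 /= in_itv /= lexx ler01.
    have -> : f 0 = id by apply: funext => x; rewrite /f H0.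
    by apply: htp0 => a b.
  - exists (\bigcup_(p in [set p : Rdefinitions.R * Rdefinitions.R | S p.1 /\ good p.1 p.2]) ball p.1 p.2).
      by apply: bigcup_open => p _; exact (@ball_open _ Rdefinitions.R^o p.1 p.2).
    apply/seteqP; split.
      move=> t [t01 ht]; split => //.
      case: (hg t t01) => e [e0 he].
      by exists (t, e) => //=; apply: ballxx.
    move=> s [s01 [[t e] /= [[t01 ht] [e0 he]] ts]]; split => //.
    apply: htpS ht (fm s s01) _; right; apply: he => //.
  - exists (~` \bigcup_(p in [set p : Rdefinitions.R * Rdefinitions.R | I01 p.1 /\ ~ S p.1 /\ good p.1 p.2]) ball p.1 p.2).
      by apply: open_closedC; apply: bigcup_open => p _; exact (@ball_open _ Rdefinitions.R^o p.1 p.2).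
    apply/seteqP; split.
      move=> t [t01 ht]; split => // -[[t' e] /= [t'01 [nSt' [e0 he]]] tt'].
      apply: nSt'; split => //.
      apply: htpS ht (fm t' t'01) _; left; apply: he => //.
    move=> s [s01 ns]; split => //.
    apply: contrapT => nSs.
    have hs : ~ S s by move=> [_ h]; exact: nSs h.
    case: (hg s s01) => e [e0 he].
    apply: ns; exists (s, e) => //=; last by apply: ballxx.
have : S 1 by rewrite SI /I01 /= in_itv /= lexx ler01.
move=> [_ h1]; exists x0.
by have <- : f 1 = (fun _ => x0) by apply: funext => x; rewrite /f H1.
Qed.
End ContrHcontr.

End MT2.
Import MT2.

Module MT3.
Import all_classical all_reals topology normedtype Rstruct Rstruct_topology lra.
Import Order.TTheory GRing.Theory Num.Theory.
Local Open Scope classical_set_scope.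
Local Open Scope ring_scope.

Lemma htp_seq (T : finType) (le : rel T) g : htp le id g ->
  exists m (F : nat -> T -> T), [/\ F 0%N = id, F m = g,
    (forall i, mono le (F i)) &
    (forall i, (i < m)%N -> lef le (F i) (F i.+1) \/ lef le (F i.+1) (F i))].
Proof.
move=> hg; induction hg as [mf|g h _ [m [F [F0 Fm Fmono Fc]]] mh c].
  by exists 0%N, (fun _ => id); split => // i.
exists m.+1, (fun i => if (i <= m)%N then F i else h); split => //.
- by rewrite ltnn.
- by move=> i; case: ifP.
- move=> i; rewrite ltnS => im; rewrite im; case: (ltnP i m) => [iml|mi].
    exact: Fc.
  have eim : i = m by apply/eqP; rewrite eqn_leq im mi.
  by subst i; rewrite Fm.
Qed.

Section Build.
Variable X : fposet.
Hypothesis lr : reflexive (@ple X).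
Hypothesis lt : transitive (@ple X).
Let T := pcarrier X.
Variables (m : nat) (F : nat -> T -> T).
Hypotheses (Fmono : forall i, mono (@ple X) (F i))
  (Fc : forall i, (i < m)%N -> lef (@ple X) (F i) (F i.+1) \/ lef (@ple X) (F i.+1) (F i)).

Definition lefb (f g : T -> T) := [forall z, ple (f z) (g z)].
Definition mnF j : T -> T := fun x => if lefb (F j) (F j.+1) then F j x else F j.+1 x.
Definition Hf (t : Rdefinitions.R) : T -> T :=
  let u := t * m%:R in let j := Num.truncn u in if j%:R == u then F j else mnF j.

Lemma mnF_mono j : mono (@ple X) (mnF j).
Proof. by move=> a b ab; rewrite /mnF; case: ifP => _; apply: Fmono. Qed.

Lemma Hf_mono t : mono (@ple X) (Hf t).
Proof. rewrite /Hf; case: ifP => _; [exact: Fmono | exact: mnF_mono]. Qed.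

Lemma P1 j : (j < m)%N -> lef (@ple X) (mnF j) (F j).
Proof.
move=> jm z; rewrite /mnF; case: ifP => [_|/negbT]; first exact: lr.
case: (Fc jm) => h; last by move=> _; apply: h.
by move/forallPn => [w]; rewrite h.
Qed.

Lemma P2 j : (j < m)%N -> lef (@ple X) (mnF j) (F j.+1).
Proof.
move=> jm z; rewrite /mnF; case: ifP => [/forallP h|_]; last exact: lr.
exact: h.
Qed.

Lemma lefrefl f : lef (@ple X) f f. Proof. by move=> z; apply: lr. Qed.

Lemma key t : I01 t -> exists2 e : Rdefinitions.R, 0 < e &
  forall s, I01 s -> `|t - s| < e -> lef (@ple X) (Hf s) (Hf t).
Proof.
rewrite /I01 /= in_itv /= => /andP [t0 t1].
case: (posnP m) => [m0|mpos].
  exists 1 => // s _ _; rewrite /Hf m0 !mulr0 truncn0 eqxx; exact: lefrefl.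
have mr0 : (0 : Rdefinitions.R) < m%:R by rewrite ltr0n.
set u := t * m%:R.
have u0 : 0 <= u by rewrite /u mulr_ge0 // ltW.
have um : u <= m%:R by rewrite /u ler_piMl // ltW.
set j := Num.truncn u.
have /andP [ju uj] := truncn_itv u0.
rewrite -/j in ju uj.
have jS : (j.+1)%:R = j%:R + 1 :> Rdefinitions.R by rewrite -natr1.
rewrite jS in uj.
have conv s e : `|t - s| < e -> (u - e * m%:R < s * m%:R < u + e * m%:R).
  rewrite ltr_distlC => /andP [h1 h2].
  by rewrite /u -!mulrBl -mulrDl !ltr_pM2r // h1 h2.
rewrite /Hf -/u -/j.
case: eqP => [gu|ngu].
- exists (m%:R^-1); first by rewrite invr_gt0.
  move=> s; rewrite in_itv /= => /andP [s0 s1] /conv; rewrite mulVf; last by rewrite gt_eqF.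
  set v := s * m%:R => /andP [v1 v2].
  have v0 : 0 <= v by rewrite /v mulr_ge0 // ltW.
  have vm : v <= m%:R by rewrite /v ler_piMl // ltW.
  case: (lerP j%:R v) => jv.
  + have -> : Num.truncn v = j by apply: truncn_def; rewrite jv jS; lra.
    have [e|nv] := eqVneq (j%:R : Rdefinitions.R) v.
      exact: lefrefl.
    apply: P1.
    rewrite -(ltr_nat Rdefinitions.R).
    have : j%:R < v by rewrite lt_neqAle jv nv.
    move=> h; lra.
  + have jpos : (0 < j)%N by rewrite -(ltr_nat Rdefinitions.R); lra.
    have jm1 : (j.-1)%:R = j%:R - 1 :> Rdefinitions.R.
      by rewrite -[in RHS](prednK jpos) -natr1; lra.
    have -> : Num.truncn v = j.-1.
      by apply: truncn_def; rewrite -natr1 jm1; apply/andP; split; lra.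
    have -> : ((j.-1)%:R == v) = false by apply/negbTE; rewrite jm1; apply/eqP; lra.
    have jm : (j <= m)%N by rewrite -(ler_nat Rdefinitions.R) gu.
    have h := P2 (j:=j.-1); rewrite (prednK jpos) in h.
    by move: (h jm).
- have ju' : j%:R < u by rewrite lt_neqAle ju andbT; apply/eqP.
  set d := Order.min (u - j%:R) (j%:R + 1 - u).
  have d1 : d <= u - j%:R by rewrite ge_min lexx.
  have d2 : d <= j%:R + 1 - u by rewrite ge_min lexx orbT.
  have d0 : 0 < d by rewrite lt_min; apply/andP; split; lra.
  exists (d / m%:R); first by rewrite divr_gt0.
  move=> s; rewrite in_itv /= => /andP [s0 s1] /conv; rewrite mulfVK; last by rewrite gt_eqF.
  set v := s * m%:R => /andP [v1 v2].
  have -> : Num.truncn v = j by apply: truncn_def; rewrite -natr1; apply/andP; split; lra.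
  have -> : (j%:R == v) = false by apply/negbTE; apply/eqP; lra.
  exact: lefrefl.
Qed.
End Build.

Lemma hcontr_contr (X : fposet) : reflexive (@ple X) -> transitive (@ple X) ->
  hcontr (@ple X) -> contractible X.
Proof.
move=> lr lt [p hp].
have [m [F [F0 Fm Fmono Fc]]] := htp_seq hp.
pose H (q : fspace X * Rdefinitions.R) : fspace X := @Hf X m F q.2 q.1.
exists p, H; split; last split.
- apply: (locc_cont lr lt) => x t t01.
  have [e e0 he] := key lr Fc t01.
  exists e => // y s yx s01 ts.
  apply: lt (he s s01 ts y) _.
  exact: Hf_mono.
- move=> x; rewrite /H /Hf /= mul0r truncn0 eqxx F0 //.
- move=> x; rewrite /H /Hf /= mul1r natrK eqxx Fm //.
Qed.

End MT3.
Import MT3.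

Module MO1.
Local Open Scope group_scope.

Lemma max_chain (T : finType) (le : rel T) : porder le -> forall s : {set T},
  s != set0 -> (forall x y, x \in s -> y \in s -> le x y || le y x) ->
  exists2 m, m \in s & forall z, z \in s -> le z m.
Proof.
case=> lr la lt s /set0Pn [x0 xs] hc.
case: (@arg_maxnP _ x0 (fun z => z \in s) (fun z => #|[set w | le w z]|) xs) => m ms mmax.
exists m => // z zs.
case/orP: (hc z m zs ms) => // mz.
have : [set w | le w m] \subset [set w | le w z].
  by apply/subsetP => w; rewrite !inE => wm; apply: lt wm mz.
move=> sub.
have : [set w | le w m] == [set w | le w z] by rewrite eqEcard sub /=; exact: mmax.
by move/eqP/setP/(_ z); rewrite !inE lr.
Qed.

Section Orbits.
Variables (gT : finGroupType) (Y : gposet gT).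
Let T := pcarrier Y.
Let le := @ple Y.
Hypothesis po : porder le.
Hypothesis act1 : forall x : T, Defs.gact x 1 = x.
Hypothesis actM : forall (x : T) g h, Defs.gact x (g * h) = Defs.gact (Defs.gact x g) h.

Let lr : reflexive le. Proof. by case: po. Qed.
Let la : antisymmetric le. Proof. by case: po. Qed.
Let lt : transitive le. Proof. by case: po. Qed.

Lemma actK (x : T) g : Defs.gact (Defs.gact x g) g^-1 = x.
Proof. by rewrite -actM mulgV act1. Qed.

Lemma act_inj g : injective (fun x : T => Defs.gact x g).
Proof. by move=> a b /= e; rewrite -(actK a g) e actK. Qed.

Lemma L0 (a : T) g : le a (Defs.gact a g) -> Defs.gact a g = a.
Proof.
move=> h.
have H k : le a (Defs.gact a (g ^+ k)).
  elim: k => [|k IH]; first by rewrite expg0 act1 lr.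
  apply: lt h _; rewrite expgSr actM; exact: gact_mono IH.
have h2 : le (Defs.gact a g) a.
  have := @gact_mono _ Y _ _ g (H #[g].-1).
  by rewrite -actM -expgSr prednK ?order_gt0 // expg_order act1.
by apply: la; rewrite h h2.
Qed.

Lemma mem_orbitG (x : T) g : Defs.gact x g \in orbitG x.
Proof. by apply/imsetP; exists g. Qed.

Lemma orbitG_self (x : T) : x \in orbitG x.
Proof. by rewrite -{1}(act1 x) mem_orbitG. Qed.

Lemma orbitG_eq (x y : T) : y \in orbitG x -> orbitG y = orbitG x.
Proof.
case/imsetP => g _ ->; apply/setP => z; apply/imsetP/imsetP => [[h _ ->]|[h _ ->]].
  by exists (g * h); rewrite ?inE // actM.
by exists (g^-1 * h); rewrite ?inE // actM actK.
Qed.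

Lemma orbitG_sym (x y : T) : y \in orbitG x -> x \in orbitG y.
Proof. by move/orbitG_eq ->; apply: orbitG_self. Qed.

Lemma is_orbit_ob (x : T) : @is_orbit gT Y (orbitG x).
Proof. by apply/existsP; exists x. Qed.
Definition ob (x : T) : orbits Y := @exist _ (fun A => @is_orbit gT Y A) (orbitG x)
  (is_orbit_ob x).

Lemma orbitsP (A : orbits Y) : exists x, val A = orbitG x.
Proof. by case/existsP: (valP A) => x /eqP ->; exists x. Qed.

Lemma orbits_eq (A : orbits Y) x : x \in val A -> A = ob x.
Proof.
case: (orbitsP A) => y e xA; apply: val_inj; rewrite /= e.
by apply/esym/orbitG_eq; rewrite -e.
Qed.

Definition ole := @ple (orbit_poset Y).

Lemma oleP (A B : orbits Y) :
  reflect (exists y z, [/\ y \in val A, z \in val B & le y z]) (ole A B).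
Proof.
apply: (iffP existsP) => [[y /andP [yA /existsP [z /andP [zB yz]]]]|[y [z [yA zB yz]]]].
  by exists y, z.
by exists y; rewrite yA; apply/existsP; exists z; rewrite zB.
Qed.

Lemma porder_ole : porder ole.
Proof.
split.
- move=> A; apply/oleP; case: (orbitsP A) => x e.
  by exists x, x; rewrite e orbitG_self lr.
- move=> A B /andP [/oleP [y [z [yA zB yz]]] /oleP [z' [y' [z'B y'A zy]]]].
  have Ay := orbits_eq yA; have Az := orbits_eq zB.
  have : z' \in orbitG z by rewrite -[orbitG z]/(val (ob z)) -Az.
  case/imsetP => h _ ez'.
  have : y' \in orbitG (Defs.gact y h).
    by rewrite (orbitG_eq (mem_orbitG y h)) -[orbitG y]/(val (ob y)) -Ay.
  case/imsetP => k _ ey'.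
  have yh : le (Defs.gact y h) (Defs.gact z h) by apply: gact_mono.
  have l1 : le (Defs.gact y h) (Defs.gact (Defs.gact y h) k).
    by rewrite -ey'; apply: lt yh _; rewrite -ez'.
  have e1 := L0 l1.
  have : le (Defs.gact z h) (Defs.gact y h) by rewrite -ez' -e1 -ey'.
  move=> zy'; have e2 : Defs.gact y h = Defs.gact z h by apply: la; rewrite yh zy'.
  rewrite Ay Az; apply: val_inj => /=.
  by rewrite -(orbitG_eq (mem_orbitG y h)) -(orbitG_eq (mem_orbitG z h)) e2.
- move=> B A C /oleP [y [z [yA zB yz]]] /oleP [z' [w [z'B wC zw]]].
  apply/oleP.
  have Az := orbits_eq zB.
  have : z' \in orbitG z by rewrite -[orbitG z]/(val (ob z)) -Az.
  case/imsetP => h _ ez'.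
  exists (Defs.gact y h), w; split => //.
    by rewrite (orbits_eq yA) /= mem_orbitG.
  by apply: lt zw; rewrite ez'; apply: gact_mono.
Qed.
End Orbits.

Section SdGood.
Variables (gT : finGroupType) (Y : gposet gT).
Let T := pcarrier Y.
Let le := @ple Y.
Hypothesis po : porder le.
Hypothesis act1 : forall x : T, Defs.gact x 1 = x.
Hypothesis actM : forall (x : T) g h, Defs.gact x (g * h) = Defs.gact (Defs.gact x g) h.

Lemma L0' (a : T) h : le a (Defs.gact a h) || le (Defs.gact a h) a -> Defs.gact a h = a.
Proof.
case/orP => [|hh]; first exact: L0.
have := @L0 _ Y po act1 actM (Defs.gact a h) h^-1; rewrite actK // => /(_ hh) e.
exact: esym e.
Qed.

Lemma sd_act1 (c : chains Y) : Defs.gact (c : pcarrier (sd Y)) 1 = c.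
Proof.
apply: val_inj => /=; rewrite (eq_imset (g := id)); first by rewrite imset_id.
by move=> x; rewrite act1.
Qed.

Lemma sd_actM (c : chains Y) g h :
  Defs.gact (c : pcarrier (sd Y)) (g * h) = Defs.gact (Defs.gact (c : pcarrier (sd Y)) g) h.
Proof.
apply: val_inj => /=; rewrite -imset_comp; apply: eq_imset => x /=; exact: actM.
Qed.

Lemma porder_sdY : porder (@ple (sd Y)).
Proof.
split.
- by move=> c; apply: subxx.
- by move=> c d /andP [h1 h2]; apply: val_inj; apply/eqP; rewrite eqEsubset; apply/andP.
- by move=> c d e h1 h2; apply: subset_trans h1 h2.
Qed.

Lemma chain_val (c : chains Y) x y : x \in val c -> y \in val c -> le x y || le y x.
Proof. by case/andP: (valP c) => _ /forallP h xc yc; move: (h x); rewrite xc /= => /forallP /(_ y); rewrite yc. Qed.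

Lemma card_sd_act (c : chains Y) g : #|val (Defs.gact (c : pcarrier (sd Y)) g)| = #|val c|.
Proof. by rewrite /= card_imset //; apply: act_inj. Qed.

Lemma propB_sd : propB (sd Y).
Proof.
move=> k v gs hv hw.
case: (posnP k) => [k0|kpos].
  by exists 1 => i; exfalso; have := ltn_ord i; rewrite {2}k0.
pose i00 : 'I_k := Ordinal kpos.
case: (@arg_maxnP _ i00 predT (fun i => #|val (v i)|) isT) => i0 _ imax.
have sub_max (w : 'I_k -> chains Y) : (forall i j, (val (w i) \subset val (w j)) || (val (w j) \subset val (w i))) ->
    (forall i, #|val (w i)| <= #|val (w i0)|) -> forall i, val (w i) \subset val (w i0).
  move=> hc hcard i; case/orP: (hc i i0) => // h.
  have : val (w i0) == val (w i) by rewrite eqEcard h hcard.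
  by move/eqP ->.
have vsub := sub_max v hv (fun i => imax i isT).
pose w i := Defs.gact (v i : pcarrier (sd Y)) (gs i).
have wsub : forall i, val (w i) \subset val (w i0).
  apply: sub_max => //= i; rewrite /w !card_sd_act; exact: imax.
exists (gs i0) => i; apply: val_inj => /=; apply: eq_in_imset => x xv.
have xv0 : x \in val (v i0) by apply: (subsetP (vsub i)).
have a1 : Defs.gact x (gs i) \in val (w i0) by apply: (subsetP (wsub i)); apply: imset_f.
have a2 : Defs.gact x (gs i0) \in val (w i0) by apply: imset_f.
have := chain_val a1 a2.
have -> : Defs.gact x (gs i0) = Defs.gact (Defs.gact x (gs i)) ((gs i)^-1 * gs i0).
  by rewrite -actM mulgA mulgV mul1g.
by move/L0' ->.
Qed.
End SdGood.

End MO1.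
Import MO1.

Module MO2.
Local Open Scope group_scope.

Lemma chain_predP' (P : fposet) (c : {set pcarrier P}) :
  reflect (c != set0 /\ forall x y, x \in c -> y \in c -> ple x y || ple y x)
    (chain_pred c).
Proof.
apply: (iffP andP) => [[h1 /forallP h2]|[h1 h2]]; split => //.
  by move=> x y xc yc; move: (h2 x); rewrite xc /= => /forallP /(_ y); rewrite yc.
apply/forallP => x; apply/implyP => xc; apply/forallP => y; apply/implyP => yc.
exact: h2.
Qed.

Section Iso.
Variables (gT : finGroupType) (Y : gposet gT).
Let T := pcarrier Y.
Let le := @ple Y.
Hypothesis po : porder le.
Hypothesis act1 : forall x : T, Defs.gact x 1 = x.
Hypothesis actM : forall (x : T) g h, Defs.gact x (g * h) = Defs.gact (Defs.gact x g) h.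
Hypothesis pB : propB Y.

Let lr : reflexive le. Proof. by case: po. Qed.
Let la : antisymmetric le. Proof. by case: po. Qed.
Let lt : transitive le. Proof. by case: po. Qed.

Let OY := orbit_poset Y.
Let sact1 := sd_act1 act1.
Let sactM := sd_actM actM.
Let ob := @ob gT Y.

Lemma ob_act (x : T) g : ob (Defs.gact x g) = ob x.
Proof. apply: val_inj => /=; apply: orbitG_eq => //; exact: mem_orbitG. Qed.

Lemma ob_le (x y : T) : le x y -> @ple OY (ob x) (ob y).
Proof.
move=> xy; apply/oleP; exists x, y; split => //; exact: orbitG_self.
Qed.

Definition oset (c : chains Y) : {set orbits Y} := [set ob x | x in val c].

Lemma chain_oset (c : chains Y) : @chain_pred OY (oset c).
Proof.
have /chain_predP' [c0 cc] := valP c.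
apply/chain_predP'; split.
  case/set0Pn: c0 => x xc; apply/set0Pn; exists (ob x); exact: imset_f.
move=> a b /imsetP [x xc ->] /imsetP [y yc ->].
by case/orP: (cc x y xc yc) => h; apply/orP; [left|right]; apply: ob_le.
Qed.

Lemma oset_act (c : chains Y) g : oset (Defs.gact (c : pcarrier (sd Y)) g) = oset c.
Proof.
rewrite /oset /= -imset_comp; apply: eq_imset => x /=; exact: ob_act.
Qed.

Lemma oset_rep (A : orbits (sd Y)) (c d : chains Y) :
  c \in val A -> d \in val A -> oset c = oset d.
Proof.
case: (orbitsP A) => e ->.
by move=> /imsetP [g _ ->] /imsetP [h _ ->]; rewrite !oset_act.
Qed.

Lemma repP (A : orbits (sd Y)) : exists c : chains Y, c \in val A.
Proof.
case: (orbitsP A) => c ->; exists c.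
apply: (@orbitG_self _ (sd Y)); exact: sd_act1.
Qed.

Definition PhiA (A : orbits (sd Y)) : {set orbits Y} := \bigcup_(c in val A) oset c.

Lemma PhiA_rep (A : orbits (sd Y)) c : c \in val A -> PhiA A = oset c.
Proof.
move=> cA; apply/setP => o; apply/bigcupP/idP => [[d dA]|oc].
  by rewrite (oset_rep dA cA).
by exists c.
Qed.

Lemma chain_PhiA A : @chain_pred OY (PhiA A).
Proof. by case: (repP A) => c cA; rewrite (PhiA_rep cA); apply: chain_oset. Qed.

Definition Phi (A : orbits (sd Y)) : chains OY :=
  @exist _ (fun s => @chain_pred OY s) (PhiA A) (chain_PhiA A).

Lemma Phi_mono A B : @ple (orbit_poset (sd Y)) A B -> val (Phi A) \subset val (Phi B).
Proof.
case/oleP => c [d [cA dB cd]] /=.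
rewrite (PhiA_rep cA) (PhiA_rep dB); exact: imsetS.
Qed.

Lemma Phi_refl A B : val (Phi A) \subset val (Phi B) -> @ple (orbit_poset (sd Y)) A B.
Proof.
case: (repP A) => c cA; case: (repP B) => d dB.
rewrite /= (PhiA_rep cA) (PhiA_rep dB) => sub.
have ex x : x \in val c -> exists g, Defs.gact x g \in val d.
  move=> xc; have : ob x \in oset d by apply: (subsetP sub); apply: imset_f.
  case/imsetP => y yd /(congr1 val) /= e.
  have : y \in orbitG x by rewrite e; apply: orbitG_self.
  by case/imsetP => g _ ey; exists g; rewrite -ey.
pose k := #|val c|.
pose v (i : 'I_k) : T := enum_val i.
pose gs (i : 'I_k) : gT := odflt 1 [pick g | Defs.gact (v i) g \in val d].
have gsd i : Defs.gact (v i) (gs i) \in val d.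
  rewrite /gs; case: pickP => [g //|h].
  have [g hg] := ex _ (enum_valP i); by move: (h g); rewrite hg.
have [g hg] : exists g, forall i, Defs.gact (v i) (gs i) = Defs.gact (v i) g.
  apply: pB.
  - by move=> i j; apply: chain_val; apply: enum_valP.
  - by move=> i j; apply: chain_val.
apply/(@oleP _ (sd Y)); exists (Defs.gact (c : pcarrier (sd Y)) g), d; split => //.
  by rewrite (@orbits_eq _ (sd Y) sact1 sactM A c cA) /=; apply: (@mem_orbitG _ (sd Y)).
apply/subsetP => z /imsetP [x xc ->].
have := enum_rankK_in xc xc; rewrite -/v => ex'.
by rewrite -ex' -hg.
Qed.

Definition mkY (A : {set T}) (h : @chain_pred Y A) : chains Y :=
  @exist _ (fun c => @chain_pred Y c) A h.

Lemma lift n : forall s : {set orbits Y}, #|s| = n.+1 ->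
  (forall a b, a \in s -> b \in s -> @ple OY a b || @ple OY b a) ->
  exists c : chains Y, oset c = s.
Proof.
elim: n => [|n IH] s cs hs.
  have cs1 : #|s| == 1%N by rewrite cs.
  case: (cards1P cs1) => o ->; case: (orbitsP o) => x ex.
  have hx : @chain_pred Y [set x].
    apply/chain_predP'; split; first by apply/set0Pn; exists x; rewrite inE.
    by move=> a b; rewrite !inE => /eqP -> /eqP ->; apply/orP; left; apply: lr.
  exists (mkY hx); rewrite /oset /= imset_set1; congr [set _].
  by apply: val_inj; rewrite /= ex.
have s0 : s != set0 by rewrite -card_gt0 cs.
have [om oms omax] := max_chain (porder_ole po act1 actM) s0 hs.
pose s' := s :\ om.
have cs' : #|s'| = n.+1 by move: cs; rewrite (cardsD1 om) oms add1n => -[].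
have hs' : forall a b, a \in s' -> b \in s' -> @ple OY a b || @ple OY b a.
  by move=> a b; rewrite !inE => /andP [_ ha] /andP [_ hb]; apply: hs.
have [c' ec'] := IH s' cs' hs'.
have /chain_predP' [c'0 cc'] := valP c'.
have [mx mxc mxmax] := max_chain po c'0 cc'.
have : ob mx \in s' by rewrite -ec'; apply: imset_f.
rewrite inE => /andP [_ mxs].
case/oleP: (omax _ mxs) => y [z [ymx zom yz]].
case/imsetP: ymx => h _ ey.
pose z' := Defs.gact z h^-1.
have mxz : le mx z'.
  have := @gact_mono _ Y _ _ h^-1 yz; rewrite ey actK //.
have hc : @chain_pred Y (val c' :|: [set z']).
  apply/chain_predP'; split.
    by apply/set0Pn; exists z'; rewrite !inE eqxx orbT.
  have kz a : a \in val c' -> le a z' by move=> ac; apply: lt (mxmax a ac) mxz.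
  move=> a b; rewrite !inE => /orP [ac|/eqP ->] /orP [bc|/eqP ->].
  - exact: cc'.
  - by apply/orP; left; apply: kz.
  - by apply/orP; right; apply: kz.
  - by apply/orP; left; apply: lr.
exists (mkY hc); rewrite /oset /= imsetU imset_set1.
rewrite -/(oset c') ec'.
have -> : ob z' = om.
  rewrite (orbits_eq act1 actM zom); apply: val_inj => /=.
  apply: orbitG_eq => //; exact: mem_orbitG.
by rewrite setUC setD1K.
Qed.

Lemma Phi_surj (s : chains OY) : exists A, Phi A == s.
Proof.
have /chain_predP' [s0 ss] := valP s.
have cs : #|val s| = (#|val s|.-1).+1 by rewrite prednK // card_gt0.
have [c ec] := lift cs ss.
exists (@MO1.ob _ (sd Y) c); apply/eqP; apply: val_inj => /=.
rewrite (@PhiA_rep _ c) //; exact: (@orbitG_self _ (sd Y) sact1).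
Qed.

Definition Psi (s : chains OY) : orbits (sd Y) := xchoose (Phi_surj s).

Lemma Phi_Psi s : Phi (Psi s) = s.
Proof. exact/eqP/(xchooseP (Phi_surj s)). Qed.

Lemma iso_hcontr : hcontr (@ple (orbit_poset (sd Y))) <-> hcontr (@ple (sd_poset OY)).
Proof.
have po' := @porder_ole _ (sd Y) (porder_sdY Y) sact1 sactM.
case: po' => _ la' _.
apply: (@HE2 _ _ _ _ Phi Psi).
- exact: Phi_mono.
- by move=> a b ab; apply: Phi_refl; rewrite !Phi_Psi.
- have -> : Phi \o Psi = id by apply: funext => s; apply: Phi_Psi.
  by apply: htp0 => a b.
- have -> : Psi \o Phi = id.
    apply: funext => A /=; apply: la'; apply/andP; split; apply: Phi_refl;
      by rewrite Phi_Psi.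
  by apply: htp0 => a b.
Qed.
End Iso.

End MO2.
Import MO2.

Module MF.
Local Open Scope group_scope.

Definition good (gT : finGroupType) (Y : gposet gT) :=
  [/\ porder (@ple Y), (forall x : pcarrier Y, Defs.gact x 1 = x) &
      (forall (x : pcarrier Y) g h, Defs.gact x (g * h) = Defs.gact (Defs.gact x g) h)].

Lemma good_sd gT (Y : gposet gT) : good Y -> good (sd Y).
Proof.
case=> po a1 aM; split.
- exact: porder_sdY.
- exact: sd_act1.
- exact: sd_actM.
Qed.

Lemma good_sdn gT (Y : gposet gT) n : good Y -> good (sdn n Y).
Proof. by move=> gY; elim: n => [|n IH] //=; apply: good_sd. Qed.

Lemma contr_iff gT (Y : gposet gT) : good Y ->
  contractible (orbit_poset Y) <-> hcontr (@ple (orbit_poset Y)).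
Proof.
case=> po a1 aM; have [lr _ lt] := porder_ole po a1 aM.
split; [exact: contr_hcontr | exact: hcontr_contr].
Qed.

Lemma step gT (Y : gposet gT) : good Y -> propB Y ->
  hcontr (@ple (orbit_poset (sd Y))) <-> hcontr (@ple (orbit_poset Y)).
Proof.
move=> gY pB; have [po a1 aM] := gY.
rewrite (iso_hcontr po a1 aM pB).
exact: (sd_hcontr_iff (porder_ole po a1 aM)).
Qed.

Lemma part1 gT (X : gposet gT) : good X -> forall n, (1 <= n)%N ->
  hcontr (@ple (orbit_poset (sdn n X))) <-> hcontr (@ple (orbit_poset (sd X))).
Proof.
move=> gX; elim=> [//|[|m] IH _] //.
rewrite -IH //.
have gY := good_sdn m.+1 gX.
apply: step => //.
have [po a1 aM] := good_sdn m gX.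
exact: (propB_sd po a1 aM).
Qed.


End MF.
Import MF.

Theorem corollary2p11 (gT : finGroupType) (T : finType) (le : rel T)
  (act : T -> gT -> T)
  (le_refl : reflexive le) (le_anti : antisymmetric le) (le_trans : transitive le)
  (act1 : forall x, act x 1%g = x)
  (actM : forall x g h, act x (g * h)%g = act (act x g) h)
  (act_mono : forall x y g, le x y -> le (act x g) (act y g)) :
  let X : gposet gT := @GPoset gT (@FPoset T le) act act_mono in
  (forall n : nat, 1 <= n ->
     (contractible (orbit_poset (sdn n X)) <-> contractible (orbit_poset (sd X))))
  /\
  (propB X -> forall n : nat, 1 <= n ->
     (contractible (orbit_poset (sdn n X)) <-> contractible (orbit_poset X))).
Proof.
move=> X.
have gX : good X by split.
split.
- move=> n n1.
  rewrite (contr_iff (good_sdn n gX)) (contr_iff (good_sd gX)).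
  exact: part1.
- move=> pB n n1.
  rewrite (contr_iff (good_sdn n gX)) (contr_iff gX) part1 //.
  exact: step.
Qed.
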